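(* Let $\Delta$ be a matroid complex on $[n]$ and $I=I_\Delta\subset S$. Then for every integer $m\ge 1$, the symbolic power $I^{(m)}$ is $0$-clean.
   Context: $S=K[x_1,\dots,x_n]$, $K$ a field. $I_\Delta$ is the Stanley–Reisner ideal of $\Delta$, generated by $\prod_{i\in F}x_i$ for $F\subseteq[n]$, $F\notin\Delta$. A matroid complex is a simplicial complex whose faces are the independent sets of a matroid on its vertex set. If $\Delta$ has facets $F_1,\dots,F_t$, then $I_\Delta=\bigcap_{i=1}^t P_{F_i^c}$ with $P_{F^c}=(x_j:j\notin F)$, and the $m$-th symbolic power is $I_\Delta^{(m)}=\bigcap_{i=1}^t P_{F_i^c}^m$. For a monomial $u=x_1^{a_1}\cdots x_n^{a_n}$, $\mathrm{supp}(u)=\{i:a_i>0\}$. For an ideal $I$, $\min(I)$ is the set of minimal primes of $I$. A monomial $u\neq 1$ with $u\notin I$ is a cleaner monomial of $I$ if $\min(I+Su)\subseteq\min(I)$. For $k\ge 0$, the class of $k$-clean monomial ideals is defined recursively (smallest class closed under the rule): a proper monomial ideal $I$ is $k$-clean if either $I$ is prime, or $I$ has no embedded primes and there is a cleaner monomial $u$ of $I$ with $|\mathrm{supp}(u)|\le k+1$ such that $I:u$ and $I+Su$ are $k$-clean. *)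

(* Defs.v *)
(* Monomial ideals of S = K[x_1..x_n] are encoded by the
   (upward-closed) sets of monomials they contain; a monomial
   x_1^{a_1}...x_n^{a_n} is its exponent vector in {ffun 'I_n -> nat}. *)
From mathcomp Require Import all_boot.
Set Implicit Arguments. Unset Strict Implicit. Unset Printing Implicit Defensive.

Definition mon (n : nat) := {ffun 'I_n -> nat}.

Definition mon1 (n : nat) : mon n := [ffun => 0%N].
Definition mmul (n : nat) (u v : mon n) : mon n := [ffun i => u i + v i].
Definition mdvd (n : nat) (u v : mon n) : Prop := forall i, u i <= v i.
Definition supp (n : nat) (u : mon n) : {set 'I_n} := [set i | 0 < u i].

Definition mideal (n : nat) := mon n -> Prop.
Definition is_mideal (n : nat) (I : mideal n) : Prop :=
  forall u v, I u -> mdvd u v -> I v.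
Definition proper (n : nat) (I : mideal n) : Prop := ~ I (mon1 n).
Definition msubset (n : nat) (I J : mideal n) : Prop := forall u, I u -> J u.

Definition colon (n : nat) (I : mideal n) (u : mon n) : mideal n :=
  fun v => I (mmul u v).
Definition addm (n : nat) (I : mideal n) (u : mon n) : mideal n :=
  fun v => I v \/ mdvd u v.

Definition mprime (n : nat) (I : mideal n) : Prop :=
  is_mideal I /\ proper I /\ forall u v, I (mmul u v) -> I u \/ I v.

Definition minprime (n : nat) (I P : mideal n) : Prop :=
  mprime P /\ msubset I P /\
  forall Q, mprime Q -> msubset I Q -> msubset Q P -> msubset P Q.

Definition assprime (n : nat) (I P : mideal n) : Prop :=
  mprime P /\ exists u : mon n, forall v, P v <-> colon I u v.

Definition no_embedded (n : nat) (I : mideal n) : Prop :=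
  forall P, assprime I P -> minprime I P.

Definition cleaner (n : nat) (I : mideal n) (u : mon n) : Prop :=
  u <> mon1 n /\ ~ I u /\ forall P, minprime (addm I u) P -> minprime I P.

Inductive kclean (k : nat) (n : nat) : mideal n -> Prop :=
| kclean_prime (I : mideal n) : mprime I -> kclean k I
| kclean_step (I : mideal n) (u : mon n) :
    is_mideal I -> proper I -> no_embedded I -> cleaner I u ->
    #|supp u| <= k.+1 ->
    kclean k (colon I u) -> kclean k (addm I u) -> kclean k I.

Definition matroid_complex (n : nat) (D : {set {set 'I_n}}) : Prop :=
  set0 \in D /\
  (forall A B : {set 'I_n}, B \in D -> A \subset B -> A \in D) /\
  (forall A B : {set 'I_n}, A \in D -> B \in D -> #|A| < #|B| ->
     exists2 x, x \in B :\: A & x |: A \in D).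

Definition facet (n : nat) (D : {set {set 'I_n}}) (F : {set 'I_n}) : bool :=
  (F \in D) && [forall G in D, (F \subset G) ==> (G == F)].

Definition SR_ideal (n : nat) (D : {set {set 'I_n}}) : mideal n :=
  fun u => exists F : {set 'I_n}, F \notin D /\ F \subset supp u.

(* u in P_A^m  iff  \sum_{i in A} u_i >= m *)
Definition in_primepow (n : nat) (A : {set 'I_n}) (m : nat) (u : mon n) : Prop :=
  m <= \sum_(i in A) u i.

Definition symb_power (n : nat) (D : {set {set 'I_n}}) (m : nat) : mideal n :=
  fun u => forall F : {set 'I_n}, facet D F -> in_primepow (~: F) m u.

(* Main.v *)
Require Import Defs.
From mathcomp Require Import all_boot.
From mathcomp Require Import zify.
From Stdlib Require Import FunctionalExtensionality PropExtensionality ClassicalEpsilon.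
Set Implicit Arguments. Unset Strict Implicit. Unset Printing Implicit Defensive.


Definition PS {n} (T : {set 'I_n}) : mideal n := fun v => [exists i in T, 0 < v i].
Definition ev {n} (j : 'I_n) : mon n := [ffun i => nat_of_bool (i == j)].
Definition pb (P : Prop) : bool := if excluded_middle_informative P then true else false.
Lemma pbE (P : Prop) : pb P <-> P.
Proof. by rewrite /pb; case: excluded_middle_informative. Qed.
Definition Tset {n} (P : mideal n) : {set 'I_n} := [set i | pb (P (ev i))].

Lemma PS_prime n (T : {set 'I_n}) : mprime (PS T).
Proof.
split; [|split].
- move=> u v /existsP[i /andP[iT ui]] uv; apply/existsP; exists i.
  by rewrite iT (leq_trans ui (uv i)).
- by move=> /existsP[i /andP[_]]; rewrite /mon1 ffunE.
- move=> u v /existsP[i /andP[iT]]; rewrite /mmul ffunE addn_gt0 => /orP[h|h].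
  + by left; apply/existsP; exists i; rewrite iT h.
  + by right; apply/existsP; exists i; rewrite iT h.
Qed.

Lemma ev_dvd n (i : 'I_n) (v : mon n) : mdvd (ev i) v <-> 0 < v i.
Proof.
split; first by move=> /(_ i); rewrite ffunE eqxx.
by move=> h k; rewrite ffunE; case: eqP => [->|].
Qed.

Lemma prime_char n (P : mideal n) : mprime P ->
  forall v, P v <-> exists i, P (ev i) /\ 0 < v i.
Proof.
move=> [Pid [Ppr Pm]] v; split; last by move=> [i [Pi vi]]; apply: Pid Pi _; apply/ev_dvd.
move: {2}(\sum_i v i) (leqnn (\sum_i v i)) => N; elim: N v => [|N IH] v.
- move=> s0 Pv; exfalso; apply: Ppr.
  suff -> : mon1 n = v by [].
  apply/ffunP => i; rewrite ffunE; apply/esym/eqP; rewrite -leqn0.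
  by apply: leq_trans s0; rewrite (bigD1 i) //= leq_addr.
- move=> sN Pv.
  case: (pickP (fun i => 0 < v i)) => [i vi|v0]; last first.
    exfalso; apply: Ppr; suff -> : mon1 n = v by [].
    by apply/ffunP => i; rewrite ffunE; move: (v0 i) => /= /negbT; rewrite lt0n negbK => /eqP.
  pose v' : mon n := [ffun k => v k - (k == i)].
  have E : mmul (ev i) v' = v.
    apply/ffunP => k; rewrite !ffunE; case: eqP => [->|] /=; last by rewrite subn0.
    by rewrite add1n subn1 prednK.
  move: Pv; rewrite -{1}E => /Pm [Pi|Pv']; first by exists i.
  have : \sum_k v k = (\sum_k v' k).+1.
    rewrite -{1}E /mmul; under eq_bigr do rewrite ffunE.
    rewrite big_split /= -add1n; congr (_ + _).
    rewrite (bigD1 i) //= ffunE eqxx big1 // => k /negbTE kE; by rewrite ffunE kE.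
  move=> S; have [k [Pk vk]] : exists k, P (ev k) /\ 0 < v' k.
    by apply: IH Pv'; rewrite -ltnS -S.
  exists k; split => //; apply: leq_trans vk _; rewrite ffunE leq_subr //.
Qed.

Lemma prime_PS n (P : mideal n) : mprime P -> forall v, P v <-> PS (Tset P) v.
Proof.
move=> pP v; rewrite (prime_char pP); split.
- by move=> [i [Pi vi]]; apply/existsP; exists i; rewrite inE vi andbT; apply/pbE.
- by move=> /existsP[i /andP[]]; rewrite inE => /pbE Pi vi; exists i.
Qed.

Lemma prime_eq n (P : mideal n) : mprime P -> P = PS (Tset P).
Proof.
move=> pP; apply: functional_extensionality => v.
apply: propositional_extensionality; exact: prime_PS.
Qed.

Definition Id {n} (DD : {set {set 'I_n}}) (C : {set 'I_n}) (w : 'I_n -> nat) (m : nat)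
  : mideal n := fun v =>
  [exists c in C, 0 < v c] || [forall D in DD, m <= \sum_(i in D) (v i + w i)].

Definition wt {n} (w : 'I_n -> nat) (D : {set 'I_n}) := \sum_(i in D) w i.

Definition Inv {n} (DD : {set {set 'I_n}}) (C : {set 'I_n}) :=
  [/\ (forall D1 D2, D1 \in DD -> D2 \in DD -> #|D1| = #|D2|),
      (forall D, D \in DD -> C \subset D) &
      (forall D1 D2 y, D1 \in DD -> D2 \in DD -> y \in D2 -> y \notin D1 ->
         exists2 x, x \in D1 :\: D2 & y |: (D1 :\ x) \in DD)].

Lemma Id_mideal n DD C w m : is_mideal (@Id n DD C w m).
Proof.
move=> u v /orP[/existsP[c /andP[cC uc]]|/forallP H] uv; apply/orP.
- by left; apply/existsP; exists c; rewrite cC (leq_trans uc (uv c)).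
- right; apply/forallP => D; apply/implyP => DD'.
  move/implyP: (H D) => /(_ DD') h; apply: leq_trans h _.
  by apply: leq_sum => i _; rewrite leq_add2r.
Qed.

Definition vT {n} (T : {set 'I_n}) (m : nat) : mon n := [ffun i => if i \in T then 0 else m].

Lemma notPS_vT n (T : {set 'I_n}) m : ~ PS T (vT T m).
Proof. by move=> /existsP[i /andP[iT]]; rewrite ffunE iT. Qed.

Lemma sum_ge_term n (D : {set 'I_n}) (f : 'I_n -> nat) i : i \in D -> f i <= \sum_(k in D) f k.
Proof. by move=> iD; rewrite (bigD1 i) //= leq_addr. Qed.

Lemma notId_ex n DD C w m (v : mon n) : ~ Id DD C w m v ->
  exists2 D, D \in DD & \sum_(i in D) (v i + w i) < m.
Proof.
move=> /negP; rewrite negb_or => /andP[_]; rewrite negb_forall_in => /existsP[D /andP[DD' h]].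
by exists D => //; rewrite ltnNge.
Qed.

Lemma sub_char n DD C w m (T : {set 'I_n}) :
  msubset (Id DD C w m) (PS T) ->
  exists2 D, D \in DD & wt w D < m /\ D \subset T.
Proof.
move=> sub.
have /notId_ex [D DD' h] : ~ Id DD C w m (vT T m) by move=> /sub /notPS_vT.
exists D => //; split.
- by apply: leq_ltn_trans h; apply: leq_sum => i _; rewrite leq_addl.
- apply/subsetP => i iD; apply/negPn/negP => iT.
  move: h; rewrite ltnNge => /negP; apply.
  apply: leq_trans (sum_ge_term _ iD); by rewrite ffunE (negbTE iT) leq_addr.
Qed.

Lemma sum_split_wt n (D : {set 'I_n}) (v : mon n) w :
  \sum_(i in D) (v i + w i) = \sum_(i in D) v i + wt w D.
Proof. by rewrite big_split. Qed.

Lemma Id_sub_PD n DD C w m (D : {set 'I_n}) : Inv DD C -> D \in DD -> wt w D < m ->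
  msubset (Id DD C w m) (PS D).
Proof.
move=> [_ CD _] DD' wD v /orP[/existsP[c /andP[cC vc]]|/forallP H].
- by apply/existsP; exists c; rewrite vc andbT (subsetP (CD D DD')).
- move/implyP: (H D) => /(_ DD'); rewrite sum_split_wt => h.
  case: (boolP [exists i in D, 0 < v i]) => //; rewrite negb_exists_in => /forallP v0.
  move: h; rewrite big1 ?add0n; first by rewrite leqNgt wD.
  move=> i iD.
  by move: (v0 i); rewrite iD /= -eqn0Ngt => /eqP.
Qed.

Lemma minprime_PD n DD C w m (D : {set 'I_n}) : Inv DD C -> D \in DD -> wt w D < m ->
  minprime (Id DD C w m) (PS D).
Proof.
move=> Iv DD' wD; split; [exact: PS_prime|split; first exact: Id_sub_PD].
move=> Q pQ IQ QD.
have IT : msubset (Id DD C w m) (PS (Tset Q)) by move=> v /IQ /(prime_PS pQ).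
have [D' DD'' [_ D'T]] := sub_char IT.
have TD : Tset Q \subset D.
  apply/subsetP => t; rewrite inE => /pbE /QD /existsP[i /andP[iD]].
  by rewrite ffunE; case: eqP => [<-|] //.
have : D' == D.
  rewrite eqEcard (subset_trans D'T TD) /=.
  by case: Iv => [hc _ _]; rewrite (hc D D') .
move=> /eqP E; subst D'.
move=> v /existsP[i /andP[iD vi]]; apply/(prime_PS pQ); apply/existsP; exists i.
by rewrite vi (subsetP D'T).
Qed.

Lemma minprime_char n DD C w m (P : mideal n) : Inv DD C ->
  minprime (Id DD C w m) P -> exists2 D, D \in DD & wt w D < m /\ P = PS D.
Proof.
move=> Iv [pP [IP minP]].
have IT : msubset (Id DD C w m) (PS (Tset P)) by move=> v /IP /(prime_PS pP).
have [D DD' [wD DT]] := sub_char IT.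
exists D => //; split => //.
have PDP : msubset (PS D) P.
  move=> v /existsP[i /andP[iD vi]]; apply/(prime_PS pP); apply/existsP; exists i.
  by rewrite vi (subsetP DT).
have PPD := minP _ (PS_prime D) (Id_sub_PD Iv DD' wD) PDP.
apply: functional_extensionality => v; apply: propositional_extensionality; split.
- exact: PPD.
- exact: PDP.
Qed.

Lemma no_emb n DD C w m : Inv DD C -> no_embedded (@Id n DD C w m).
Proof.
move=> Iv P [pP [u Pu]].
have [_ CD _] := Iv.
have u0 : forall c, c \in C -> u c = 0.
  move=> c cC; apply/eqP; rewrite eqn0Ngt; apply/negP => uc.
  case: pP => [_ [pr _]]; apply: pr; apply/Pu; apply/orP; left.
  by apply/existsP; exists c; rewrite cC /mmul ffunE /mon1 ffunE addn0.
set T := Tset P.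
have /notId_ex [D DD' h] : ~ Id DD C w m (mmul u (vT T m)).
  by move=> /Pu /(prime_PS pP) /notPS_vT.
have wD : wt w D < m.
  apply: leq_ltn_trans h; apply: leq_sum => i _; rewrite leq_addl //.
have DT : D \subset T.
  apply/subsetP => i iD; apply/negPn/negP => iT.
  move: h; rewrite ltnNge => /negP; apply.
  apply: leq_trans (sum_ge_term _ iD); by rewrite /mmul !ffunE (negbTE iT) addnAC leq_addl.
have TD : T \subset D.
  apply/subsetP => t; rewrite inE => /pbE /Pu /orP[/existsP[c /andP[cC]]|/forallP H].
  - rewrite /mmul ffunE u0 // add0n ffunE; case: eqP => [<- _|] //.
    exact: (subsetP (CD D DD')).
  - apply/negPn/negP => tD; move/implyP: (H D) => /(_ DD').
    apply/negP; rewrite -ltnNge; apply: leq_ltn_trans h.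
    apply: leq_sum => i iD; rewrite /mmul !ffunE.
    case: eqP => [E|_]; first by rewrite -E iD in tD.
    by rewrite addn0 leq_add2r leq_addr.
have -> : P = PS D.
  rewrite (prime_eq pP); congr PS; apply/eqP; by rewrite eqEsubset TD DT.
exact: minprime_PD.
Qed.

Definition N0 {n} (DD : {set {set 'I_n}}) (C : {set 'I_n}) : {set 'I_n} :=
  [set i | (i \notin C) && [exists D in DD, i \in D]].
Definition DDj {n} (DD : {set {set 'I_n}}) (j : 'I_n) := [set D in DD | j \in D].
Definition wj {n} (w : 'I_n -> nat) (j : 'I_n) := fun i => w i + ev j i.

Lemma sum_exch n (D : {set 'I_n}) (f : 'I_n -> nat) x y : x \in D -> y \notin D ->
  \sum_(i in y |: (D :\ x)) f i + f x = \sum_(i in D) f i + f y.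
Proof.
move=> xD yD.
have yD' : y \notin D :\ x by rewrite !inE (negbTE yD) andbF.
rewrite big_setU1 //= (big_setD1 x xD) /=; lia.
Qed.

Lemma exch_j n DD C (j : 'I_n) D : Inv DD C -> j \in N0 DD C -> D \in DD -> j \notin D ->
  exists2 x, x \in N0 DD C & x \in D /\ j |: (D :\ x) \in DD.
Proof.
move=> [_ CD ex]; rewrite inE => /andP[jC /existsP[D2 /andP[D2D jD2]]] DD' jD.
have [x] := ex D D2 j DD' D2D jD2 jD.
rewrite inE => /andP[xD2 xD] h; exists x => //.
rewrite inE; apply/andP; split; last by apply/existsP; exists D; rewrite DD' xD.
by apply: contra xD2 => xC; rewrite (subsetP (CD D2 D2D)).
Qed.

Lemma active_j n DD C w (j : 'I_n) D0 : Inv DD C -> j \in N0 DD C ->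
  (forall x, x \in N0 DD C -> w j <= w x) -> D0 \in DD ->
  exists2 D, D \in DDj DD j & wt w D <= wt w D0.
Proof.
move=> Iv jN jmin D0D; case jD0: (j \in D0).
  by exists D0 => //; rewrite inE D0D jD0.
have [x xN [xD0 D'D]] := exch_j Iv jN D0D (negbT jD0).
exists (j |: (D0 :\ x)); first by rewrite inE D'D setU11.
have := sum_exch w xD0 (negbT jD0); rewrite /wt => h2; have h1 := jmin x xN.
by rewrite -(leq_add2r (w x)) h2 leq_add2l.
Qed.

Lemma Inv_j n DD C (j : 'I_n) : Inv DD C -> j \in N0 DD C -> Inv (DDj DD j) (j |: C).
Proof.
move=> [sz CD ex] jN; split.
- by move=> D1 D2; rewrite !inE => /andP[h1 _] /andP[h2 _]; apply: sz.
- move=> D; rewrite inE => /andP[DD' jD].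
  by rewrite subUset sub1set jD CD.
- move=> D1 D2 y; rewrite !inE => /andP[D1D jD1] /andP[D2D jD2] yD2 yD1.
  have [x] := ex D1 D2 y D1D D2D yD2 yD1.
  rewrite inE => /andP[xD2 xD1] h; exists x; first by rewrite inE xD2 xD1.
  rewrite inE h /= !inE jD1 andbT; apply/orP; right; apply/negP => /eqP E.
  by rewrite -E jD2 in xD2.
Qed.

Lemma kill_eq n DD C w m (j : 'I_n) : Inv DD C -> j \in N0 DD C ->
  (forall x, x \in N0 DD C -> w j <= w x) ->
  forall v, Id (DDj DD j) (j |: C) w m v <-> (Id DD C w m v \/ 0 < v j).
Proof.
move=> Iv jN jmin v; split.
- move=> /orP[/existsP[c /andP[]]|/forallP H].
  + rewrite in_setU1 => /orP[/eqP -> vj|cC vc]; first by right.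
    by left; apply/orP; left; apply/existsP; exists c; rewrite cC vc.
  + case vj: (0 < v j); first by right.
    left; apply/orP; right; apply/forallP => D; apply/implyP => DD'.
    case jD: (j \in D).
      by move/implyP: (H D); apply; rewrite inE DD' jD.
    have [x xN [xD D'D]] := exch_j Iv jN DD' (negbT jD).
    move/implyP: (H (j |: (D :\ x))) => /(_ _).
    rewrite inE D'D setU11 => /(_ isT).
    move=> hm; have heq := sum_exch (fun i => v i + w i) xD (negbT jD).
    apply: leq_trans hm _; rewrite -(leq_add2r (v x + w x)) heq leq_add2l.
    have := jmin x xN; move/negbT: vj; rewrite -eqn0Ngt => /eqP ->.
    by rewrite add0n => h; apply: leq_trans h (leq_addl _ _).
- move=> [/orP[/existsP[c /andP[cC vc]]|/forallP H]|vj]; apply/orP.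
  + by left; apply/existsP; exists c; rewrite in_setU1 cC orbT vc.
  + right; apply/forallP => D; apply/implyP; rewrite inE => /andP[DD' _].
    by move/implyP: (H D); apply.
  + by left; apply/existsP; exists j; rewrite setU11 vj.
Qed.

Lemma addm_eq n DD C w m (j : 'I_n) : Inv DD C -> j \in N0 DD C ->
  (forall x, x \in N0 DD C -> w j <= w x) ->
  addm (Id DD C w m) (ev j) = Id (DDj DD j) (j |: C) w m.
Proof.
move=> Iv jN jmin; apply: functional_extensionality => v.
apply: propositional_extensionality; rewrite kill_eq // /addm ev_dvd; tauto.
Qed.

Lemma B1_eq n DD C w m (j : 'I_n) : Inv DD C -> j \in N0 DD C ->
  (forall x, x \in N0 DD C -> w j <= w x) -> Id DD C w m (ev j) ->
  Id DD C w m = Id (DDj DD j) (j |: C) w m.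
Proof.
move=> Iv jN jmin Ij; apply: functional_extensionality => v.
apply: propositional_extensionality; rewrite kill_eq //; split; first by left.
case=> // vj; apply: Id_mideal Ij _; exact/ev_dvd.
Qed.

Lemma colon_eq n (DD : {set {set 'I_n}}) (C : {set 'I_n}) w m (j : 'I_n) : j \notin C ->
  colon (Id DD C w m) (ev j) = Id DD C (wj w j) m.
Proof.
move=> jC; apply: functional_extensionality => v; rewrite /colon /Id; f_equal; f_equal.
- apply: eq_existsb => c; case cC: (c \in C) => //=; rewrite /mmul !ffunE.
  case: eqP => [E|] //=; by rewrite -E cC in jC.
- apply: eq_forallb => D; f_equal; f_equal; apply: eq_bigr => i _.
  rewrite /mmul /wj ffunE; lia.
Qed.

Lemma wt_wj n w (j : 'I_n) D : wt (wj w j) D = wt w D + (j \in D).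
Proof.
rewrite /wt /wj big_split /=; congr (_ + _).
case jD: (j \in D).
- rewrite (bigD1 j) //= ffunE eqxx big1 // => i /andP[_ /negbTE ij]; by rewrite ffunE ij.
- rewrite big1 // => i iD; rewrite ffunE; case: eqP => // E; by rewrite -E iD in jD.
Qed.

Definition Sm {n} (DD : {set {set 'I_n}}) (w : 'I_n -> nat) (m : nat) :=
  \sum_(D in DD) (m - wt w D).

Lemma ltn_sum_ex (I : finType) (A : {set I}) (f g : I -> nat) a :
  (forall i, i \in A -> f i <= g i) -> a \in A -> f a < g a ->
  \sum_(i in A) f i < \sum_(i in A) g i.
Proof.
move=> le aA lt; rewrite (bigD1 a) //= (bigD1 a (P := mem A)) //= -addSn.
by apply: leq_add => //; apply: leq_sum => i /andP[iA _]; apply: le.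
Qed.

Lemma Sm_pos n (DD : {set {set 'I_n}}) (w : 'I_n -> nat) m D0 : D0 \in DD -> wt w D0 < m -> 0 < Sm DD w m.
Proof. by move=> D0D wD0; rewrite /Sm (bigD1 D0) //= addn_gt0 subn_gt0 wD0. Qed.

Lemma card_kill n (C : {set 'I_n}) j : j \notin C -> #|~: (j |: C)| < #|~: C|.
Proof.
move=> jC; rewrite (cardsD1 j (~: C)) inE jC add1n ltnS; apply: subset_leq_card.
apply/subsetP => i; rewrite !inE negb_or => /andP[ij iC]; by rewrite ij iC.
Qed.

Lemma main n N : forall K (DD : {set {set 'I_n}}) C w m, #|~: C| < N -> Sm DD w m <= K ->
  Inv DD C -> (exists2 D, D \in DD & wt w D < m) -> kclean 0 (Id DD C w m).
Proof.
elim: N => [|N IHN] K DD C w m //.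
move=> hC; elim: K w => [|K IHK] w hS Iv [D0 D0D wD0].
  by move: (Sm_pos D0D wD0); rewrite leqNgt (leq_ltn_trans hS).
have [sz CD ex] := Iv.
case: (set_0Vmem (N0 DD C)) => [N0e | [i0 i0N]].
- apply: kclean_prime.
  suff -> : Id DD C w m = PS C by apply: PS_prime.
  apply: functional_extensionality => v; apply: propositional_extensionality; split.
  + move=> /orP[//|/forallP H]; move/implyP: (H D0) => /(_ D0D).
    have D0C : D0 \subset C.
      apply/subsetP => i iD0; apply/negPn/negP => iC.
      have : i \in N0 DD C by rewrite inE iC /=; apply/existsP; exists D0; rewrite D0D.
      by rewrite N0e inE.
    case: (boolP [exists c in C, 0 < v c]) => // /negP nex.
    rewrite sum_split_wt big1 ?add0n; first by rewrite leqNgt wD0.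
    move=> i iD0; apply/eqP; rewrite eqn0Ngt; apply/negP => vi; apply: nex.
    by apply/existsP; exists i; rewrite vi (subsetP D0C).
  + by move=> h; apply/orP; left.
- case: (arg_minnP w i0N) => j jN jmin.
  have {}jN : j \in N0 DD C := jN.
  have {}jmin : forall x, x \in N0 DD C -> w j <= w x := jmin.
  have jC : j \notin C by move: jN; rewrite inE => /andP[].
  have IvJ := Inv_j Iv jN.
  have [D1 D1D wD1] := active_j Iv jN jmin D0D.
  have kJ : kclean 0 (Id (DDj DD j) (j |: C) w m).
    apply: (IHN (Sm (DDj DD j) w m)) => //.
    - by apply: leq_trans (card_kill jC) _; rewrite -ltnS.
    - by exists D1 => //; apply: leq_ltn_trans wD0.
  case: (excluded_middle_informative (Id DD C w m (ev j))) => Ij.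
    by rewrite (B1_eq Iv jN jmin Ij).
  apply: (@kclean_step 0 n _ (ev j)).
  + exact: Id_mideal.
  + move=> /orP[/existsP[c /andP[_]]|/forallP H]; first by rewrite ffunE.
    move/implyP: (H D0) => /(_ D0D); rewrite sum_split_wt big1 ?add0n.
      by rewrite leqNgt wD0.
    by move=> i _; rewrite ffunE.
  + exact: no_emb.
  + split; [|split] => //.
    * move/ffunP => /(_ j); by rewrite !ffunE eqxx.
    * move=> P; rewrite addm_eq // => /(minprime_char IvJ) [D DD' [wD ->]].
      apply: minprime_PD Iv _ wD; by move: DD'; rewrite inE => /andP[].
  + rewrite -(cards1 j); apply: subset_leq_card; apply/subsetP => i.
    by rewrite !inE ffunE; case: eqP.
  + rewrite colon_eq //.
    have [D2 D2D h2] := notId_ex Ij.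
    have wD2 : wt (wj w j) D2 < m.
      by apply: leq_ltn_trans h2; rewrite /wt /wj; apply: leq_sum => i _; rewrite addnC.
    have [D3 D3D wD3] := active_j Iv jN jmin D2D.
    have wD3' : wt w D3 < m.
      apply: leq_ltn_trans wD3 _; apply: leq_ltn_trans h2.
      by apply: leq_sum => i _; rewrite leq_addl.
    apply: IHK => //; last by exists D2.
    rewrite -ltnS; apply: leq_trans hS; apply: (ltn_sum_ex (a := D3)).
    * by move=> D _; rewrite wt_wj leq_sub2l // leq_addr.
    * by move: D3D; rewrite inE => /andP[].
    * move: D3D; rewrite inE => /andP[_ jD3]; rewrite wt_wj jD3 addn1 subnSK //.
  + by rewrite addm_eq.
Qed.

Lemma facetP n (Dl : {set {set 'I_n}}) F : facet Dl F ->
  F \in Dl /\ forall G, G \in Dl -> F \subset G -> G = F.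
Proof.
move=> /andP[FD /forallP H]; split => // G GD FG.
by move/implyP: (H G) => /(_ GD) /implyP /(_ FG) /eqP.
Qed.

Lemma facet_max n (Dl : {set {set 'I_n}}) F G : matroid_complex Dl -> facet Dl F ->
  G \in Dl -> #|G| <= #|F|.
Proof.
move=> [_ [_ aug]] /facetP [FD Fm] GD; rewrite leqNgt; apply/negP => lt.
have [x] := aug F G FD GD lt; rewrite inE => /andP[xF _] xFD.
have := Fm _ xFD (subsetUr _ _) => E.
by move: xF; rewrite -E setU11.
Qed.

Lemma facet_card n (Dl : {set {set 'I_n}}) F1 F2 : matroid_complex Dl -> facet Dl F1 ->
  facet Dl F2 -> #|F1| = #|F2|.
Proof.
move=> mc f1 f2; apply/eqP; rewrite eqn_leq.
rewrite (facet_max mc f2 (proj1 (facetP f1))).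
by rewrite (facet_max mc f1 (proj1 (facetP f2))).
Qed.

Lemma facet_of_card n (Dl : {set {set 'I_n}}) F A : matroid_complex Dl -> facet Dl F ->
  A \in Dl -> #|A| = #|F| -> facet Dl A.
Proof.
move=> mc fF AD cA; apply/andP; split => //; apply/forallP => G; apply/implyP => GD.
apply/implyP => AG; rewrite eq_sym eqEcard AG cA.
exact: facet_max mc fF GD.
Qed.

Lemma facet_exch n (Dl : {set {set 'I_n}}) F1 F2 y : matroid_complex Dl -> facet Dl F1 ->
  facet Dl F2 -> y \in F1 -> y \notin F2 ->
  exists2 x, x \in F2 :\: F1 & facet Dl (x |: (F1 :\ y)).
Proof.
move=> mc f1 f2 yF1 yF2.
have [_ [her aug]] := mc.
have AD : F1 :\ y \in Dl by apply: her (proj1 (facetP f1)) (subsetDl _ _).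
have cA : #|F1| = #|F1 :\ y|.+1 by rewrite (cardsD1 y F1) yF1.
have [x] : exists2 x, x \in F2 :\: (F1 :\ y) & x |: (F1 :\ y) \in Dl.
  apply: aug AD (proj1 (facetP f2)) _; by rewrite -(facet_card mc f1 f2) cA.
rewrite inE => /andP[xA xF2] xD.
have xy : x != y by apply: contraNneq yF2 => <-.
have xF1 : x \notin F1 by move: xA; rewrite !inE xy.
exists x; first by rewrite inE xF1.
apply: facet_of_card mc f1 xD _.
by rewrite cardsU1 xA cA add1n.
Qed.

Definition DD0 {n} (Dl : {set {set 'I_n}}) : {set {set 'I_n}} :=
  [set X | facet Dl (~: X)].

Lemma Inv0 n (Dl : {set {set 'I_n}}) : matroid_complex Dl -> Inv (DD0 Dl) set0.
Proof.
move=> mc; split.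
- move=> D1 D2; rewrite !inE => f1 f2.
  by rewrite (cardsCs D1) (cardsCs D2) (facet_card mc f1 f2).
- by move=> D _; rewrite sub0set.
- move=> D1 D2 y; rewrite !inE => f1 f2 yD2 yD1.
  have yF1 : y \in ~: D1 by rewrite inE.
  have yF2 : y \notin ~: D2 by rewrite inE yD2.
  have [x] := facet_exch mc f1 f2 yF1 yF2.
  rewrite !inE negbK => /andP[xD1 xD2] fx.
  exists x; first by rewrite inE xD1 xD2.
  rewrite inE; suff -> : ~: (y |: (D1 :\ x)) = x |: (~: D1 :\ y) by [].
  apply/setP => z; rewrite !inE.
  case: (eqVneq z y) => [zy|zy]; case: (eqVneq z x) => [zx|zx] //=.
  all: subst. all: rewrite ?xD1 ?(negbTE yD1) //. by rewrite xD1 in yD1.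
Qed.

Lemma symb_eq n (Dl : {set {set 'I_n}}) m :
  symb_power Dl m = Id (DD0 Dl) set0 (fun _ => 0) m.
Proof.
apply: functional_extensionality => v; apply: propositional_extensionality; split.
- move=> H; apply/orP; right; apply/forallP => X; apply/implyP; rewrite inE => fX.
  have := H _ fX; rewrite /in_primepow setCK.
  move=> h; apply: leq_trans h _; rewrite leq_eqVlt; apply/orP; left; apply/eqP; apply: eq_bigr => i _; by rewrite addn0.
- move=> /orP[/existsP[c]|/forallP H]; first by rewrite inE.
  move=> F fF; move/implyP: (H (~: F)); rewrite inE setCK => /(_ fF).
  move=> h; apply: leq_trans h _; rewrite leq_eqVlt; apply/orP; left; apply/eqP; apply: eq_bigr => i _; by rewrite addn0.
Qed.

Theorem theorem5p5 (n : nat) (D : {set {set 'I_n}}) (m : nat) :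
  matroid_complex D -> 1 <= m -> kclean 0 (symb_power D m).
Proof.
move=> mc m1; rewrite symb_eq.
apply: (@main n (#|~: (set0 : {set 'I_n})|).+1 (Sm (DD0 D) (fun _ => 0) m)) => //.
- exact: Inv0.
- have [_ [_ _]] := mc.
  have D0 : set0 \in D by case: mc.
  case: (arg_maxnP (fun F : {set 'I_n} => #|F|) D0) => F FD Fmax.
  exists (~: F).
  + rewrite inE setCK; apply/andP; split => //; apply/forallP => G; apply/implyP => GD.
    apply/implyP => FG; rewrite eq_sym eqEcard FG; exact: Fmax.
  + by rewrite /wt big1.
Qed.
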